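(* Let $q$ be an odd prime power, $s \ge 2$ even, and let $E,F\subset\mathbb{F}_q^s$ satisfy $\# E \le \# F$ and $(\# E)(\# F) \ge 900q^s$. Then \[ \left|\sigma_{E, F}(0)\right|^2 = q^{-3s} \nu(0)^2 + O\left(q^{-3s-1}(\#E)^2(\# F)^2\right). \]
   Context: $\mathbb{F}_q$ is the finite field with $q$ elements, $q$ odd. Fix a nontrivial additive character $\psi$ of $\mathbb{F}_q$. For $f:\mathbb{F}_q^s\to\mathbb{C}$, $\hat f(\mathbf{x})=q^{-s}\sum_{\mathbf{m}\in\mathbb{F}_q^s}\psi(-\mathbf{m}\cdot\mathbf{x})f(\mathbf{m})$. Sets are identified with their indicator functions. $|\mathbf{x}|^2=\sum_ix_i^2$. $\sigma_{E,F}(0)=\sum_{\mathbf{m}\in\mathbb{F}_q^s:|\mathbf{m}|^2=0}\overline{\hat E(\mathbf{m})}\hat F(\mathbf{m})$, and $\nu(0)=\#\{(\mathbf{x},\mathbf{y})\in E\times F:|\mathbf{x}-\mathbf{y}|^2=0\}$. The implied $O$-constant depends only on $s$. *)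

(* Defs.v *)
From HB Require Import structures.
From mathcomp Require Import all_boot all_order all_algebra all_field.
Set Implicit Arguments. Unset Strict Implicit. Unset Printing Implicit Defensive.
Import Order.TTheory GRing.Theory Num.Theory.
Local Open Scope ring_scope.

Section Defs.
Variables (K : finFieldType) (s : nat).

Definition dotv (x y : 'rV[K]_s) : K := \sum_(i < s) x 0 i * y 0 i.
Definition normsq (x : 'rV[K]_s) : K := dotv x x.

Definition is_add_char (psi : K -> algC) : Prop :=
  psi 0 = 1 /\ forall x y, psi (x + y) = psi x * psi y.
Definition nontrivial_char (psi : K -> algC) : Prop := exists x, psi x != 1.

(* \hat f(m) = q^{-s} sum_x psi(-m.x) f(x), f the indicator of E *)
Definition fourier (psi : K -> algC) (E : {set 'rV[K]_s}) (m : 'rV[K]_s) : algC :=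
  ((#|K| ^ s)%:R)^-1 * \sum_(x in E) psi (- dotv m x).

Definition sigma0 (psi : K -> algC) (E F : {set 'rV[K]_s}) : algC :=
  \sum_(m : 'rV[K]_s | normsq m == 0) (fourier psi E m)^* * fourier psi F m.

Definition nu0 (E F : {set 'rV[K]_s}) : nat :=
  #|[set p in setX E F | normsq (p.1 - p.2) == 0]|.
End Defs.

(* Main.v *)
Require Import Defs.
From HB Require Import structures.
From mathcomp Require Import all_boot all_order all_algebra all_field all_fingroup all_solvable.
From mathcomp Require Import ring zify lra.
Import Order.TTheory GRing.Theory Num.Theory FinRing.Theory.
Local Open Scope ring_scope.

Lemma zbound (u v w q sg : int) : 0 <= u -> u <= w -> 0 <= v -> v <= q * w -> 1 <= q ->
  (sg = 1 \/ sg = -1) ->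
  `|u ^+ 2 + 2 * sg * u * (v - w) + w ^+ 2 - 2 * v * w| <= 6 * q * w ^+ 2.
Proof.
move=> u0 uw v0 vq q1 hs.
have w0 : 0 <= w by lia.
have h1 : u * u <= w * w by nia.
have h2 : u * v <= w * (q * w) by nia.
have h3 : u * w <= q * (w * w) by nia.
have h4 : v * w <= q * (w * w) by nia.
have h5 : w * w <= q * (w * w) by nia.
rewrite ler_norml; case: hs => ->; apply/andP; split; nia.
Qed.
Lemma final_int (A P q D nu e f : nat) (gam : int) : (1 <= q)%N -> (P * P = A)%N ->
  gam ^+ 2 = A%:Z -> (P <= f)%N -> (D <= e)%N -> (nu <= e * f)%N ->
  `|(A%:Z * D%:Z + gam * (q%:Z * nu%:Z - (e * f)%:Z)) ^+ 2 - A%:Z * q%:Z ^+ 2 * nu%:Z ^+ 2|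
   <= 6 * A%:Z * q%:Z * e%:Z ^+ 2 * f%:Z ^+ 2.
Proof.
move=> q1 hA hg Pf De nuef.
have hgP : gam ^+ 2 = (P%:Z) ^+ 2 by rewrite hg -hA PoszM expr2.
have hs : exists2 sg : int, (sg = 1 \/ sg = -1) & gam = sg * P%:Z.
  move/eqP: hgP; rewrite eqf_sqr => /orP [/eqP -> | /eqP ->].
    by exists 1; [left | rewrite mul1r].
  by exists (-1); [right | rewrite mulN1r].
case: hs => sg hsg ->.
have sg2 : sg ^+ 2 = 1 by case: hsg => ->.
rewrite -hA !PoszM.
set Pz := P%:Z; set Dz := D%:Z; set qz := q%:Z; set nz := nu%:Z; set ez := e%:Z; set fz := f%:Z.
have key : (Pz * Pz * Dz + sg * Pz * (qz * nz - ez * fz)) ^+ 2 - Pz * Pz * qz ^+ 2 * nz ^+ 2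
  = (Pz * Pz) * ((Pz * Dz) ^+ 2 + 2 * sg * (Pz * Dz) * (qz * nz - ez * fz) + (ez * fz) ^+ 2
       - 2 * (qz * nz) * (ez * fz)).
  by case: hsg => ->; ring.
rewrite key normrM ger0_norm ?mulr_ge0 //.
have -> : 6 * (Pz * Pz) * qz * ez ^+ 2 * fz ^+ 2 = (Pz * Pz) * (6 * qz * (ez * fz) ^+ 2) by ring.
apply: ler_wpM2l; first by rewrite mulr_ge0.
apply: zbound => //; rewrite /Pz /Dz /qz /nz /ez /fz -?PoszM ?lez_nat.
- by rewrite mulnC leq_mul.
- by rewrite leq_mul.
Qed.

Section Char.
Variables (K : finFieldType) (psi : K -> algC).
Hypothesis hpsi : is_add_char psi.
Hypothesis hnt : nontrivial_char psi.
Hypothesis hodd : odd #|K|.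

Let q := #|K|.

Lemma psi0 : psi 0 = 1. Proof. by case: hpsi. Qed.
Lemma psiD x y : psi (x + y) = psi x * psi y. Proof. by case: hpsi. Qed.

Lemma psi_sum_big (I : finType) (P : pred I) (f : I -> K) :
  psi (\sum_(i | P i) f i) = \prod_(i | P i) psi (f i).
Proof. exact: (big_morph psi psiD psi0). Qed.

Lemma mulrn_card (x : K) : x *+ #|K| = 0.
Proof. by rewrite -zmodXgE -cardsT expg_cardG ?inE. Qed.

Lemma two_neq0 : (2 : K) != 0.
Proof.
apply/eqP=> h2.
have := mulrn_card 1.
have e : #|K| = (1 + 2 * (#|K|./2))%N by rewrite -{1}(odd_double_half #|K|) hodd -mul2n.
rewrite e mulrnDr -mulr_natl natrM h2 !mul0r addr0 mulr1n.
by rewrite mulr1 => /eqP; rewrite oner_eq0.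
Qed.

Lemma psiXcard x : psi x ^+ #|K| = 1.
Proof.
have h n : psi x ^+ n = psi (x *+ n).
  by elim: n => [|n IH]; rewrite ?psi0 // exprS mulrS psiD IH.
by rewrite h mulrn_card psi0.
Qed.

Lemma psiN x : psi (- x) * psi x = 1.
Proof. by rewrite -psiD addNr psi0. Qed.

Lemma psi_conj x : (psi x)^* = psi (- x).
Proof.
have n1 : `|psi x| = 1.
  apply/eqP; rewrite -(pexpr_eq1 (n:=#|K|)) ?normr_ge0 //; last first.
    by apply: (leq_trans _ (finNzRing_gt1 K)).
  by rewrite -normrX psiXcard normr1.
have nz : psi x != 0 by apply/eqP=> h; move: n1; rewrite h normr0 => /eqP; rewrite eq_sym oner_eq0.
apply: (mulfI nz); rewrite -normCK n1 expr1n mulrC psiN //.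
Qed.

Lemma psi_sum0 : \sum_(y : K) psi y = 0.
Proof.
case: hnt => x0 hx0.
have h : \sum_(y : K) psi y = psi x0 * \sum_(y : K) psi y.
  rewrite mulr_sumr (reindex_inj (addrI x0)) /=.
  by apply: eq_bigr => y _; rewrite psiD.
apply/eqP; move: h => /eqP; rewrite -subr_eq0 -{1}(mul1r (\sum_y psi y)) -mulrBl mulf_eq0.
by rewrite subr_eq0 eq_sym (negbTE hx0).
Qed.

Lemma psi_sum_mul a : \sum_(t : K) psi (t * a) = (a == 0)%:R * q%:R.
Proof.
have [->|anz] := eqVneq a 0.
  rewrite mul1r; under eq_bigr do rewrite mulr0 psi0.
  by rewrite sumr_const cardT -?cardE.
rewrite mul0r (reindex_inj (mulIf (invr_neq0 anz))) /= -[RHS](psi_sum0).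
by apply: eq_bigr => j _; rewrite mulfVK.
Qed.

Definition G (t : K) : algC := \sum_(x : K) psi (t * x ^+ 2).

Lemma GGN (t : K) : t != 0 -> G t * G (- t) = q%:R.
Proof.
move=> tnz; rewrite /G big_distrl /=.
under eq_bigr do rewrite big_distrr /=.
rewrite exchange_big /=.
have h (y : K) : \sum_(x : K) psi (t * x ^+ 2) * psi (- t * y ^+ 2)
   = \sum_(u : K) psi (t * u ^+ 2) * psi (y * (2 * t * u)).
  rewrite (reindex_inj (addrI y)) /=; apply: eq_bigr => u _.
  have e (a b c : K) : a * (b + c) ^+ 2 + - a * b ^+ 2 = a * c ^+ 2 + b * (2 * a * c) by ring.
  by rewrite -!psiD e.
under eq_bigr do rewrite h.
rewrite exchange_big /=.
under eq_bigr do rewrite -mulr_sumr psi_sum_mul.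
rewrite (bigD1 0) //= big1 ?addr0.
  by rewrite expr0n /= mulr0 psi0 mulr0 eqxx !mul1r.
move=> u unz; have -> : (2 * t * u == 0) = false.
  by apply/negbTE; rewrite !mulf_neq0 ?two_neq0.
by rewrite !mul0r mulr0.
Qed.

Lemma G_scale (t c : K) : c != 0 -> G (t * c ^+ 2) = G t.
Proof.
move=> cnz; rewrite /G [RHS](reindex_inj (mulIf cnz)) /=.
have e (a b d : K) : a * d ^+ 2 * b ^+ 2 = a * (b * d) ^+ 2 by ring.
by apply: eq_bigr => x _; rewrite e.
Qed.

Definition r (y : K) : nat := #|[pred x : K | x ^+ 2 == y]|.

Lemma G_r (f : K -> algC) : \sum_(x : K) f (x ^+ 2) = \sum_(y : K) (r y)%:R * f y.
Proof.
transitivity (\sum_(x : K) \sum_(y : K) (if x ^+ 2 == y then f y else 0)).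
  apply: eq_bigr => x _; rewrite -big_mkcond /=.
  by rewrite (big_pred1 (x ^+ 2)) // => y; rewrite /= eq_sym.
rewrite exchange_big /=; apply: eq_bigr => y _.
by rewrite -big_mkcond /= sumr_const mulr_natl.
Qed.

Lemma r_sum : (\sum_(y : K) r y)%N = q.
Proof.
transitivity (\sum_(y : K) \sum_(x : K) (x ^+ 2 == y : nat))%N.
  apply: eq_bigr => y _; rewrite /r -sum1_card big_mkcond /=.
  by apply: eq_bigr => x _; rewrite inE; case: (_ == _).
rewrite exchange_big /= (eq_bigr (fun _ => 1%N)); first by rewrite sum1_card.
move=> x _; rewrite (bigD1 (x ^+ 2)) //= eqxx big1 // => y /negbTE.
by rewrite eq_sym => ->.
Qed.

Lemma r_le2 (y : K) : (r y <= 2)%N.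
Proof.
rewrite /r; case: (pickP [pred x : K | x ^+ 2 == y]) => [a /= /eqP ha | none].
  have sub : [pred x : K | x ^+ 2 == y] \subset pred2 a (- a).
    by apply/subsetP => x; rewrite !inE -ha eqf_sqr.
  apply: leq_trans (subset_leq_card sub) _.
  by rewrite card2; case: (_ != _).
by rewrite (eq_card0 none).
Qed.

Lemma r0 : r 0 = 1%N.
Proof.
have -> : r 0 = #|pred1 (0 : K)|.
  by apply: eq_card => x; rewrite !inE /= sqrf_eq0.
by rewrite card1.
Qed.

Lemma r_nonsq (y : K) : ~~ [exists c : K, c ^+ 2 == -1] -> y != 0 ->
  r y = 0%N \/ r (- y) = 0%N.
Proof.
move=> hn ynz; rewrite /r.
case: (pickP [pred x : K | x ^+ 2 == y]) => [a /= /eqP ha | none]; last first.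
  by left; apply: eq_card0.
case: (pickP [pred x : K | x ^+ 2 == - y]) => [b /= /eqP hb | none]; last first.
  by right; apply: eq_card0.
exfalso; move/negP: hn; apply; apply/existsP; exists (b / a).
have anz : a != 0 by apply: contraNneq ynz => a0; rewrite -ha a0 expr0n.
rewrite expr_div_n hb ha mulNr divff //; rewrite -ha expf_neq0 //.
Qed.

Lemma r_pair (y : K) : ~~ [exists c : K, c ^+ 2 == -1] -> (r y + r (- y))%N = 2%N.
Proof.
move=> hn.
have le2 z : (r z + r (- z) <= 2)%N.
  have [->|znz] := eqVneq z 0; first by rewrite oppr0 r0.
  by case: (r_nonsq z hn znz) => ->; rewrite ?addn0 ?add0n r_le2.
have hsum : (\sum_(z : K) (r z + r (- z)))%N = (2 * q)%N.
  rewrite big_split /= r_sum (reindex_inj oppr_inj) /=.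
  under eq_bigr do rewrite opprK.
  by rewrite r_sum addnn -mul2n.
have h0 : (\sum_(z : K) (2 - (r z + r (- z))))%N == 0%N.
  have : (\sum_(z : K) ((r z + r (- z)) + (2 - (r z + r (- z)))))%N = (2 * q)%N.
    under eq_bigr do rewrite subnKC ?le2 //.
    by rewrite sum_nat_const cardT -cardE mulnC.
  rewrite big_split /= hsum => /eqP.
  by rewrite -{2}[(2 * q)%N]addn0 eqn_add2l.
move: h0; rewrite sum_nat_eq0 => /forallP /(_ y) /=.
by move: (le2 y); rewrite subn_eq0 => a b; apply/eqP; rewrite eqn_leq a b.
Qed.

Lemma G_anti (t : K) : ~~ [exists c : K, c ^+ 2 == -1] -> t != 0 -> G t + G (- t) = 0.
Proof.
move=> hn tnz.
rewrite /G (G_r (fun y => psi (t * y))) (G_r (fun y => psi (- t * y))).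
rewrite [X in _ + X](reindex_inj oppr_inj) /= -big_split /=.
have -> : \sum_(y : K) ((r y)%:R * psi (t * y) + (r (- y))%:R * psi (- t * - y))
   = \sum_(y : K) 2 * psi (y * t).
  apply: eq_bigr => y _; rewrite mulrNN -mulrDl -natrD r_pair //.
  by rewrite [t * y]mulrC.
by rewrite -mulr_sumr psi_sum_mul (negbTE tnz) !mul0r mulr0.
Qed.

Definition eps : int := if [exists c : K, c ^+ 2 == -1] then 1 else -1.

Lemma Gsq (t : K) : t != 0 -> G t ^+ 2 = eps%:~R * q%:R.
Proof.
move=> tnz; rewrite /eps; case: ifP => [/existsP [c /eqP hc] | /negbT hn].
  have cnz : c != 0 by apply/eqP => c0; move: hc; rewrite c0 expr0n /= => /eqP; rewrite eq_sym oppr_eq0 oner_eq0.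
  by rewrite expr2 -{2}(G_scale t c cnz) hc mulrN1 GGN // mul1r.
have : G (- t) = - G t by apply/eqP; rewrite -addr_eq0 addrC G_anti.
move=> e; rewrite expr2 -[G t * G t]opprK -mulrN -e GGN //.
by rewrite mulN1r.
Qed.

Variable s : nat.
Implicit Types (x y z m : 'rV[K]_s).

Definition Sz z : algC := \sum_(m : 'rV[K]_s | normsq m == 0) psi (dotv m z).
Definition Wt (t : K) z : algC := \sum_(m : 'rV[K]_s) psi (t * normsq m + dotv m z).

Lemma dotvB m x y : dotv m (x - y) = dotv m x - dotv m y.
Proof. by rewrite /dotv -sumrB; apply: eq_bigr => i _; rewrite !mxE mulrBr. Qed.

Lemma sigma0_eq (E F : {set 'rV[K]_s}) :
  sigma0 psi E F = ((q ^ s)%:R)^-1 * ((q ^ s)%:R)^-1 *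
     \sum_(x in E) \sum_(y in F) Sz (x - y).
Proof.
rewrite /sigma0 /fourier /Sz.
have cc : (((#|K| ^ s)%:R)^-1 : algC)^* = ((#|K| ^ s)%:R)^-1.
  by rewrite fmorphV rmorph_nat.
pose c : algC := ((#|K| ^ s)%:R)^-1.
transitivity (\sum_(m : 'rV[K]_s | normsq m == 0) c * c *
   \sum_(x in E) \sum_(y in F) psi (dotv m (x - y))).
  apply: eq_bigr => m _.
  rewrite rmorphM /= cc rmorph_sum /=.
  under eq_bigr do rewrite psi_conj opprK.
  rewrite mulrACA big_distrl /=; congr (_ * _); apply: eq_bigr => x _.
  rewrite big_distrr /=; apply: eq_bigr => y _.
  by rewrite -psiD -dotvB.
rewrite -mulr_sumr; congr (_ * _).
rewrite exchange_big /=; apply: eq_bigr => x _.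
by rewrite exchange_big.
Qed.

Lemma q_neq0 : (q%:R : algC) != 0.
Proof. by rewrite pnatr_eq0 -lt0n /q; apply: (leq_trans _ (finNzRing_gt1 K)). Qed.

Lemma Sz_eq z : Sz z = (q%:R)^-1 * \sum_(t : K) Wt t z.
Proof.
rewrite /Sz /Wt big_mkcond /= exchange_big /= mulr_sumr; apply: eq_bigr => m _.
case: ifP => h.
  under eq_bigr do rewrite (eqP h) mulr0 add0r.
  by rewrite sumr_const cardT -cardE -[psi _ *+ _]mulr_natl mulKf // q_neq0.
rewrite (_ : \sum_(t : K) _ = \sum_(t : K) psi (t * normsq m) * psi (dotv m z)).
  by rewrite -mulr_suml psi_sum_mul h !mul0r mulr0.
by apply: eq_bigr => t _; rewrite psiD.
Qed.

Lemma Wt_prod t z :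
  Wt t z = \prod_(i < s) \sum_(a : K) psi (t * a ^+ 2 + a * z 0 i).
Proof.
rewrite bigA_distr_bigA /= /Wt.
pose h := fun f : {ffun 'I_s -> K} => \row_i f i.
have hb : bijective h.
  exists (fun m : 'rV[K]_s => [ffun i => m 0 i]).
    by move=> f; apply/ffunP => i; rewrite ffunE mxE.
  by move=> m; apply/rowP => i; rewrite mxE ffunE.
rewrite (reindex h) /=; last by apply: onW_bij.
apply: eq_bigr => f _.
rewrite -psi_sum_big; congr psi.
rewrite /normsq /dotv mulr_sumr -big_split /=; apply: eq_bigr => i _.
by rewrite /h !mxE expr2.
Qed.

Lemma sq_complete (t c : K) : t != 0 ->
  \sum_(a : K) psi (t * a ^+ 2 + a * c) = psi (- (4 * t)^-1 * c ^+ 2) * G t.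
Proof.
move=> tnz.
have e (t' c' x : K) : t' != 0 ->
   t' * (- c' / (2 * t') + x) ^+ 2 + (- c' / (2 * t') + x) * c'
   = t' * x ^+ 2 + - (4 * t')^-1 * c' ^+ 2.
  move=> h; have h2 := two_neq0; field.
  rewrite h h2 andbT /=; have -> : (4 : K) = 2 * 2 by rewrite -natrM.
  by rewrite mulf_neq0.
rewrite (reindex_inj (addrI (- c / (2 * t)))) /=.
under eq_bigr do rewrite e // psiD.
by rewrite -mulr_suml mulrC.
Qed.

Lemma Wt0 z : Wt 0 z = (z == 0)%:R * (q ^ s)%:R.
Proof.
rewrite Wt_prod.
under eq_bigr do under eq_bigr do rewrite mul0r add0r.
under eq_bigr do rewrite psi_sum_mul.
case: (boolP [forall i, z 0 i == 0]) => [/forallP hz | /forallPn [i hi]].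
  have -> : z = 0 by apply/rowP => i; rewrite mxE; apply/eqP.
  under eq_bigr do rewrite mxE eqxx mul1r.
  by rewrite prodr_const card_ord eqxx mul1r natrX.
rewrite (bigD1 i) //= (negbTE hi) mul0r mul0r.
have -> : (z == 0) = false by apply/negbTE; apply: contraNneq hi => ->; rewrite mxE.
by rewrite mul0r.
Qed.

Lemma Wt_nz t z : t != 0 -> Wt t z = G t ^+ s * psi (- (4 * t)^-1 * normsq z).
Proof.
move=> tnz; rewrite Wt_prod.
under eq_bigr do rewrite sq_complete //.
rewrite big_split /= prodr_const card_ord mulrC; congr (_ * _).
rewrite -psi_sum_big; congr psi.
by rewrite /normsq /dotv mulr_sumr; apply: eq_bigr => i _; rewrite expr2.
Qed.

Lemma four_neq0 : (4 : K) != 0.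
Proof. have -> : (4 : K) = 2 * 2 by rewrite -natrM. by rewrite mulf_neq0 ?two_neq0. Qed.

Lemma sum_inv_psi (N : K) :
  \sum_(t : K | t != 0) psi (- (4 * t)^-1 * N) = (N == 0)%:R * q%:R - 1.
Proof.
pose g := fun t : K => - (4 * t)^-1.
have gK : involutive g.
  move=> t; rewrite /g mulrN invrN opprK invfM invrK mulKf //; exact: four_neq0.
have full : \sum_(t : K) psi (g t * N) = (N == 0)%:R * q%:R.
  by rewrite (reindex_inj (inv_inj gK)) /= -psi_sum_mul; apply: eq_bigr => t _; rewrite gK.
rewrite -full [in RHS](bigD1 0) //=.
have g0 : g 0 = 0 by rewrite /g mulr0 invr0 oppr0.
rewrite g0 mul0r psi0 [1 + _]addrC addrK.
by [].
Qed.

Variable k : nat.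
Hypothesis hk : s = (2 * k)%N.
Let Gam : algC := (eps%:~R * q%:R) ^+ k.

Lemma sumWt z : \sum_(t : K) Wt t z =
  (z == 0)%:R * (q ^ s)%:R + Gam * ((normsq z == 0)%:R * q%:R - 1).
Proof.
rewrite (bigD1 0) //= Wt0; congr (_ + _).
have Gs t : t != 0 -> G t ^+ s = Gam by move=> tnz; rewrite hk exprM Gsq.
under eq_bigr => t tnz do rewrite Wt_nz // Gs //.
by rewrite -mulr_sumr sum_inv_psi.
Qed.

Lemma Sz_formula z : Sz z = (q%:R)^-1 *
  ((z == 0)%:R * (q ^ s)%:R + Gam * ((normsq z == 0)%:R * q%:R - 1)).
Proof. by rewrite Sz_eq sumWt. Qed.

Lemma dsum (E F : {set 'rV[K]_s}) (A B : 'rV[K]_s -> 'rV[K]_s -> bool) (a b c : algC) :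
  \sum_(x in E) \sum_(y in F) (a * (A x y)%:R + b * (B x y)%:R + c) =
  a * (\sum_(x in E) \sum_(y in F) (A x y : nat))%:R
  + b * (\sum_(x in E) \sum_(y in F) (B x y : nat))%:R + c * (#|E| * #|F|)%:R.
Proof.
have inner x : \sum_(y in F) (a * (A x y)%:R + b * (B x y)%:R + c) =
   a * (\sum_(y in F) (A x y : nat))%:R + b * (\sum_(y in F) (B x y : nat))%:R
   + c * #|F|%:R.
  by rewrite !big_split /= -!mulr_sumr !natr_sum sumr_const mulr_natr.
rewrite (eq_bigr _ (fun x _ => inner x)) !big_split /= -!mulr_sumr !natr_sum.
by rewrite sumr_const -[_ *+ #|E|]mulr_natl -natrM.
Qed.

Lemma nu0_sum (E F : {set 'rV[K]_s}) :
  nu0 E F = (\sum_(x in E) \sum_(y in F) (normsq (x - y) == 0%R : nat))%N.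
Proof.
rewrite /nu0 pair_big /= big_mkcond /= -sum1_card big_mkcond /=.
apply: eq_bigr => p _; rewrite !inE.
by case: (p.1 \in E); case: (p.2 \in F); case: (_ == 0).
Qed.

Lemma dsum_Sz (E F : {set 'rV[K]_s}) :
  \sum_(x in E) \sum_(y in F) Sz (x - y) =
  (q%:R)^-1 * ((q ^ s)%:R * (\sum_(x in E) \sum_(y in F) (x == y : nat))%:R
     + Gam * (q%:R * (nu0 E F)%:R - (#|E| * #|F|)%:R)).
Proof.
have e (x y : 'rV[K]_s) : Sz (x - y) =
    ((q%:R)^-1 * (q ^ s)%:R) * (x == y)%:R
  + ((q%:R)^-1 * Gam * q%:R) * (normsq (x - y) == 0)%:R + (- ((q%:R)^-1 * Gam)).
  by rewrite Sz_formula subr_eq0; ring.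
rewrite (eq_bigr _ (fun x _ => eq_bigr _ (fun y _ => e x y))).
by rewrite dsum nu0_sum; ring.
Qed.
End Char.

Lemma D_le (s : nat) (K : finFieldType) (E F : {set 'rV[K]_s}) :
  (\sum_(x in E) \sum_(y in F) (x == y : nat) <= #|E|)%N.
Proof.
rewrite -sum1_card; apply: leq_sum => x _.
apply: (leq_trans (_ : _ <= \sum_(y : 'rV[K]_s) (x == y : nat))%N).
  rewrite [X in (X <= _)%N]big_mkcond /=; apply: leq_sum => y _.
  by case: (y \in F).
rewrite (bigD1 x) //= eqxx big1 // => y /negbTE.
by rewrite eq_sym => ->.
Qed.

Lemma nu_le (s : nat) (K : finFieldType) (E F : {set 'rV[K]_s}) :
  (nu0 E F <= #|E| * #|F|)%N.
Proof.
rewrite /nu0 -cardsX; apply: subset_leq_card; apply/subsetP => p.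
by rewrite inE => /andP [].
Qed.

Theorem lemma8 (s : nat) (hs2 : (2 <= s)%N) (hseven : ~~ odd s) :
  exists C : algC, 0 <= C /\
  forall (K : finFieldType) (psi : K -> algC),
    is_add_char psi -> nontrivial_char psi -> odd #|K| ->
    forall E F : {set 'rV[K]_s},
      (#|E| <= #|F|)%N ->
      (900 * #|K| ^ s <= #|E| * #|F|)%N ->
      `| `|sigma0 psi E F| ^+ 2
         - ((#|K| ^ (3 * s))%:R)^-1 * ((nu0 E F)%:R) ^+ 2 |
      <= C * ((#|K| ^ (3 * s + 1))%:R)^-1 * (#|E|%:R) ^+ 2 * (#|F|%:R) ^+ 2.
Proof.
exists 6; split => // K psi hpsi hnt hodd E F hEF hbig.
set k := s./2.
have hk : s = (2 * k)%N by rewrite -{1}(odd_double_half s) (negbTE hseven) add0n -mul2n.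
set q := #|K|.
set A := (q ^ s)%N.
set P := (q ^ k)%N.
have hPA : (P * P)%N = A by rewrite /P /A -expnD addnn -mul2n -hk.
set e := #|E|. set f := #|F|.
set D := (\sum_(x in E) \sum_(y in F) (x == y : nat))%N.
set nu := nu0 E F.
have hD : (D <= e)%N by apply: D_le.
have hnu : (nu <= e * f)%N by apply: nu_le.
have q1 : (1 <= q)%N by apply: (leq_trans _ (finNzRing_gt1 K)).
have hPf : (P <= f)%N.
  rewrite leqNgt; apply/negP => h.
  have := ltn_mul h h; rewrite hPA => hA.
  have : (A <= f * f)%N.
    apply: (leq_trans (leq_pmull _ _)) (leq_trans hbig _) => //.
    by rewrite leq_mul2r hEF orbT.
  by rewrite leqNgt hA.
set gam : int := (eps K * q%:Z) ^+ k.
have hgam : gam ^+ 2 = A%:Z.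
  have e2 : eps K ^+ 2 = 1 by rewrite /eps; case: ifP.
  rewrite /gam -exprM mulnC exprM [(eps K * _) ^+ 2]exprMn e2 mul1r -exprM -hk.
  by rewrite /A; elim: (s) => // n IH; rewrite exprS IH expnS PoszM.
rewrite (@sigma0_eq K psi hpsi s E F) (@dsum_Sz K psi hpsi hnt hodd s k hk E F).
rewrite -/q -/A -/e -/f -/D -/nu.
set Xz : int := A%:Z * D%:Z + gam * (q%:Z * nu%:Z - (e * f)%:Z).
have hX : (A%:R * D%:R + ((eps K)%:~R * q%:R) ^+ k * (q%:R * nu%:R - (e * f)%:R) : algC)
    = Xz%:~R.
  rewrite /Xz /gam !PoszM !(intrD, intrM, intrB, rmorphN) [((_ * _) ^+ k)%:~R]rmorphXn /= intrM natrM.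
  by rewrite ?PoszM ?intrM.
rewrite hX.
set AA : algC := A%:R. set qq : algC := q%:R.
have AAnz : AA != 0 by rewrite /AA /A pnatr_eq0 expn_eq0 negb_and -lt0n q1.
have qqnz : qq != 0 by rewrite /qq pnatr_eq0 -lt0n q1.
have AA0 : 0 <= AA by rewrite /AA ler0n.
have qq0 : 0 <= qq by rewrite /qq ler0n.
have h3 : ((q ^ (3 * s))%:R : algC) = AA ^+ 3 by rewrite /AA /A mulnC expnM natrX.
have h31 : ((q ^ (3 * s + 1))%:R : algC) = AA ^+ 3 * qq by rewrite expnD expn1 natrM h3.
rewrite h3 h31.
rewrite normrM ger0_norm; last by rewrite !mulr_ge0 ?invr_ge0.
rewrite exprMn real_normK; last by rewrite rpredM ?realz // rpredV /qq realn.
set L : algC := (AA ^+ 4 * qq ^+ 2)^-1.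
have e1 : (AA^-1 / AA) ^+ 2 * (qq^-1 * Xz%:~R) ^+ 2 - (AA ^+ 3)^-1 * nu%:R ^+ 2
   = L * (Xz%:~R ^+ 2 - AA * qq ^+ 2 * nu%:R ^+ 2).
  by rewrite /L; field; rewrite AAnz qqnz.
have e2 : 6 / (AA ^+ 3 * qq) * e%:R ^+ 2 * f%:R ^+ 2 = L * (6 * AA * qq * e%:R ^+ 2 * f%:R ^+ 2).
  by rewrite /L; field; rewrite AAnz qqnz.
rewrite e1 e2 normrM ger0_norm; last by rewrite /L invr_ge0 mulr_ge0 // exprn_ge0.
apply: ler_wpM2l; first by rewrite /L invr_ge0 mulr_ge0 // exprn_ge0.
have c1 : Xz%:~R ^+ 2 - AA * qq ^+ 2 * nu%:R ^+ 2
   = ((Xz ^+ 2 - A%:Z * q%:Z ^+ 2 * nu%:Z ^+ 2)%:~R : algC).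
  by rewrite intrB !intrM !expr2.
have c2 : 6 * AA * qq * e%:R ^+ 2 * f%:R ^+ 2
   = ((6 * A%:Z * q%:Z * e%:Z ^+ 2 * f%:Z ^+ 2)%:~R : algC).
  by rewrite !intrM !expr2.
rewrite c1 c2 -intr_norm ler_int.
exact: (@final_int A P q D nu e f gam q1 hPA hgam hPf hD hnu).
Qed.
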